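(* Let $K$ be a field and $A$ a noetherian $K$-algebra such that the endomorphism ring of every simple left $A$-module is algebraic over $K$. If $A$ is $(\diamond)$-extremal, then the center $Z$ of $A$ is algebraic over $K$.
   Context: A module $M$ is monolithic if the intersection of all nonzero submodules of $M$ is nonzero. A noetherian ring has property $(\diamond)$ if every finitely generated monolithic (left) module over it is artinian. A noetherian ring $A$ is $(\diamond)$-extremal if $A$ does not have property $(\diamond)$ but $A/I$ has property $(\diamond)$ for every nonzero two-sided ideal $I$ of $A$. *)

(* Defs.v *)
From HB Require Import structures.
From mathcomp Require Import all_boot all_order all_algebra.
Set Implicit Arguments. Unset Strict Implicit. Unset Printing Implicit Defensive.
Import GRing.Theory.
Local Open Scope ring_scope.

Definition submodule (R : pzRingType) (M : lmodType R) (S : M -> Prop) : Prop :=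
  [/\ S 0, (forall x y, S x -> S y -> S (x + y)) & (forall (a : R) x, S x -> S (a *: x))].

Definition left_ideal (R : pzRingType) (I : R -> Prop) : Prop :=
  [/\ I 0, (forall x y, I x -> I y -> I (x + y)) & (forall a x, I x -> I (a * x))].
Definition right_ideal (R : pzRingType) (I : R -> Prop) : Prop :=
  [/\ I 0, (forall x y, I x -> I y -> I (x + y)) & (forall a x, I x -> I (x * a))].

Definition ACC (T : Type) (P : (T -> Prop) -> Prop) : Prop :=
  forall C : nat -> T -> Prop, (forall n, P (C n)) ->
    (forall n x, C n x -> C n.+1 x) ->
    exists N, forall n, (N <= n)%N -> forall x, C n x -> C N x.

Definition DCC (T : Type) (P : (T -> Prop) -> Prop) : Prop :=
  forall C : nat -> T -> Prop, (forall n, P (C n)) ->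
    (forall n x, C n.+1 x -> C n x) ->
    exists N, forall n, (N <= n)%N -> forall x, C N x -> C n x.

Definition noetherian_ring (R : pzRingType) : Prop :=
  ACC (@left_ideal R) /\ ACC (@right_ideal R).

Definition artinian_module (R : pzRingType) (M : lmodType R) : Prop :=
  DCC (@submodule R M).

Definition finitely_generated (R : pzRingType) (M : lmodType R) : Prop :=
  exists (n : nat) (v : 'I_n -> M),
    forall m : M, exists c : 'I_n -> R, m = \sum_(i < n) c i *: v i.

(* M is monolithic: the intersection of all nonzero submodules is nonzero. *)
Definition monolithic (R : pzRingType) (M : lmodType R) : Prop :=
  exists x : M, x != 0 /\
    forall S : M -> Prop, submodule S -> (exists y, S y /\ y != 0) -> S x.

Definition diamond (R : pzRingType) : Prop :=
  forall M : lmodType R, finitely_generated M -> monolithic M -> artinian_module M.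

(* Factor rings A/I are
   represented (up to isomorphism) as surjective ring morphisms f : A -> B
   with nonzero kernel I = ker f. *)
Definition diamond_extremal (R : pzRingType) : Prop :=
  [/\ noetherian_ring R, ~ diamond R &
      forall (B : pzRingType) (f : {rmorphism R -> B}),
        (forall b : B, exists a : R, f a = b) ->
        (exists a : R, a != 0 /\ f a = 0) -> diamond B].

Definition simple_module (R : pzRingType) (M : lmodType R) : Prop :=
  (exists x : M, x != 0) /\
  forall S : M -> Prop, submodule S -> (forall x, S x -> x = 0) \/ (forall x, S x).

Definition module_endo (R : pzRingType) (M : lmodType R) (f : M -> M) : Prop :=
  (forall x y, f (x + y) = f x + f y) /\ (forall (a : R) x, f (a *: x) = a *: f x).

(* For a K-algebra A and a left A-module M, K acts on M through k |-> k%:A. *)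
Definition endo_algebraic (K : fieldType) (A : algType K) (M : lmodType A)
    (f : M -> M) : Prop :=
  exists p : {poly K}, p != 0 /\
    forall m : M, \sum_(i < size p) (p`_i)%:A *: iter i f m = 0.

Definition simple_endos_algebraic (K : fieldType) (A : algType K) : Prop :=
  forall M : lmodType A, simple_module M ->
    forall f : M -> M, module_endo f -> endo_algebraic f.

Definition center_algebraic (K : fieldType) (A : algType K) : Prop :=
  forall z : A, (forall a : A, z * a = a * z) ->
    exists p : {poly K}, p != 0 /\ \sum_(i < size p) p`_i *: z ^+ i = 0.

(* Main.v *)
Require Import Defs.
From HB Require Import structures.
From mathcomp Require Import all_boot all_order all_algebra.
From Stdlib Require Import ClassicalEpsilon Classical.
Set Implicit Arguments. Unset Strict Implicit. Unset Printing Implicit Defensive.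
Import GRing.Theory.
Local Open Scope ring_scope.
Local Open Scope quotient_scope.
Definition pdec (P : Prop) : bool :=
  if excluded_middle_informative P then true else false.
Lemma pdecP (P : Prop) : reflect P (pdec P).
Proof. by rewrite /pdec; case: excluded_middle_informative => h; constructor. Qed.

Section Quot.
Variables (R : pzRingType) (M : lmodType R).

Definition annM (a : R) : Prop := forall m : M, a *: m = 0.
Definition eqa (a b : R) : bool := pdec (annM (a - b)).

Lemma eqa_refl : reflexive eqa.
Proof. by move=> a; apply/pdecP => m; rewrite subrr scale0r. Qed.
Lemma eqa_sym : symmetric eqa.
Proof.
move=> a b; apply/pdecP/pdecP => h m; by rewrite -opprB scaleNr h oppr0.
Qed.
Lemma eqa_trans : transitive eqa.
Proof.
move=> b a c /pdecP h1 /pdecP h2; apply/pdecP => m.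
by rewrite -(subrK b a) -addrA scalerDl h1 h2 addr0.
Qed.

Canonical eqa_equiv := EquivRel eqa eqa_refl eqa_sym eqa_trans.

Definition QB := {eq_quot eqa}.
HB.instance Definition _ := Choice.on QB.
HB.instance Definition _ := EqQuotient.on QB.

Definition pQ (a : R) : QB := \pi_QB a.

Lemma pQ_eq a b : pQ a = pQ b <-> annM (a - b).
Proof. by split => [/eqquotP /pdecP | h]; [|apply/eqquotP/pdecP]. Qed.

Lemma reprQ (a : R) : annM (repr (pQ a) - a).
Proof. by apply/pQ_eq; rewrite /pQ reprK. Qed.

Lemma reprQ_act (a : R) (m : M) : repr (pQ a) *: m = a *: m.
Proof. by apply/eqP; rewrite -subr_eq0 -scalerBl reprQ. Qed.

Definition qzero : QB := pQ 0.
Lemma qW (P : QB -> Prop) : (forall a, P (pQ a)) -> forall x, P x.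
Proof. by move=> h x; rewrite -[x]reprK; apply: h. Qed.
Fact qkey : unit. Proof. exact: tt. Qed.
Definition qopp := locked_with qkey (fun x : QB => pQ (- repr x)).
Definition qadd := locked_with qkey (fun x y : QB => pQ (repr x + repr y)).
Definition qone : QB := pQ 1.
Definition qmul := locked_with qkey (fun x y : QB => pQ (repr x * repr y)).

Lemma annMD a b : annM a -> annM b -> annM (a + b).
Proof. by move=> ha hb m; rewrite scalerDl ha hb addr0. Qed.
Lemma annMN a : annM a -> annM (- a).
Proof. by move=> ha m; rewrite scaleNr ha oppr0. Qed.
Lemma annMl a b : annM b -> annM (a * b).
Proof. by move=> hb m; rewrite -scalerA hb scaler0. Qed.
Lemma annMr a b : annM a -> annM (a * b).
Proof. by move=> ha m; rewrite -scalerA ha. Qed.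

Lemma pQ_add a b : pQ (a + b) = qadd (pQ a) (pQ b).
Proof.
rewrite [qadd]unlock.
apply/pQ_eq; have := annMD (reprQ a) (reprQ b).
have -> : repr (pQ a) - a + (repr (pQ b) - b) = repr (pQ a) + repr (pQ b) - (a + b).
  by rewrite opprD !addrA; congr (_ + _); rewrite -!addrA; congr (_ + _); rewrite addrC.
by move/annMN; rewrite opprB.
Qed.
Lemma pQ_opp a : pQ (- a) = qopp (pQ a).
Proof.
rewrite [qopp]unlock; apply/pQ_eq; rewrite opprK addrC; exact: reprQ.
Qed.
Lemma pQ_mul a b : pQ (a * b) = qmul (pQ a) (pQ b).
Proof.
rewrite [qmul]unlock.
apply/pQ_eq; set a' := repr (pQ a); set b' := repr (pQ b).
have e : a * b - a' * b' = a * (b - b') + (a - a') * b'.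
  by rewrite mulrBr mulrBl addrA subrK.
rewrite e; apply: annMD; first by apply: annMl; rewrite -opprB; apply: annMN; apply: reprQ.
by apply: annMr; rewrite -opprB; apply: annMN; apply: reprQ.
Qed.

Lemma qaddA : associative qadd.
Proof. by move=> x y z; elim/qW: x => a; elim/qW: y => b; elim/qW: z => c; rewrite -!pQ_add addrA. Qed.
Lemma qaddC : commutative qadd.
Proof. by move=> x y; elim/qW: x => a; elim/qW: y => b; rewrite -!pQ_add addrC. Qed.
Lemma qadd0 : left_id qzero qadd.
Proof. by move=> x; elim/qW: x => a; rewrite -!pQ_add add0r. Qed.
Lemma qaddN : left_inverse qzero qopp qadd.
Proof. by move=> x; elim/qW: x => a; rewrite -pQ_opp -!pQ_add addNr. Qed.

HB.instance Definition _ := GRing.isZmodule.Build QB qaddA qaddC qadd0 qaddN.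
Lemma pQ_addE a b : pQ (a + b) = pQ a + pQ b. Proof. exact: pQ_add. Qed.

Lemma qmulA : associative qmul.
Proof. by move=> x y z; elim/qW: x => a; elim/qW: y => b; elim/qW: z => c; rewrite -!pQ_mul mulrA. Qed.
Lemma qmul1 : left_id qone qmul.
Proof. by move=> x; elim/qW: x => a; rewrite -!pQ_mul mul1r. Qed.
Lemma qmulr1 : right_id qone qmul.
Proof. by move=> x; elim/qW: x => a; rewrite -!pQ_mul mulr1. Qed.
Lemma qmulDl : left_distributive qmul +%R.
Proof.
by move=> x y z; elim/qW: x => a; elim/qW: y => b; elim/qW: z => c; rewrite -!pQ_addE -!pQ_mul -pQ_addE mulrDl.
Qed.
Lemma qmulDr : right_distributive qmul +%R.
Proof.
by move=> x y z; elim/qW: x => a; elim/qW: y => b; elim/qW: z => c; rewrite -!pQ_addE -!pQ_mul -pQ_addE mulrDr.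
Qed.

HB.instance Definition _ := GRing.Zmodule_isPzRing.Build QB qmulA qmul1 qmulr1 qmulDl qmulDr.

Lemma pQ_is_zmod : zmod_morphism pQ.
Proof. by move=> a b; rewrite pQ_add pQ_opp. Qed.
HB.instance Definition _ := GRing.isZmodMorphism.Build R QB pQ pQ_is_zmod.
Lemma pQ_is_monoid : monoid_morphism pQ.
Proof. by split => // a b; rewrite pQ_mul. Qed.
HB.instance Definition _ := GRing.isMonoidMorphism.Build R QB pQ pQ_is_monoid.

Definition MB : Type := M.
HB.instance Definition _ := GRing.Zmodule.on MB.
Definition qscale (x : QB) (m : MB) : MB := (repr x *: (m : M)).
Lemma qscaleA a b v : qscale a (qscale b v) = qscale (a * b) v.
Proof.
move: a b => x y; elim/qW: x => a; elim/qW: y => b.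
by rewrite /qscale /= -[(_ * _)]/(qmul _ _) -pQ_mul !reprQ_act scalerA.
Qed.
Lemma qscale1 : left_id 1 qscale.
Proof. by move=> v; rewrite /qscale reprQ_act scale1r. Qed.
Lemma qscaleDr : right_distributive qscale +%R.
Proof. by move=> a u v; rewrite /qscale scalerDr. Qed.
Lemma qscaleDl v : {morph qscale^~ v: a b / a + b}.
Proof.
move=> a b; move: a b => x y; elim/qW: x => a; elim/qW: y => b.
by rewrite /qscale /= -[(_ + _)]/(qadd _ _) -pQ_add !reprQ_act scalerDl.
Qed.
HB.instance Definition _ := GRing.Zmodule_isLmodule.Build QB MB qscaleA qscale1 qscaleDr qscaleDl.


Lemma qscale_pQ a (m : MB) : pQ a *: m = (a *: (m : M) : M).
Proof. exact: reprQ_act. Qed.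

Lemma submodule_MB (S : M -> Prop) : @submodule R M S -> @submodule QB MB S.
Proof.
case=> h0 hD hZ; split => // b x Sx.
by rewrite -[b]reprK qscale_pQ; apply: hZ.
Qed.

Lemma submodule_MB' (S : MB -> Prop) : @submodule QB MB S -> @submodule R M S.
Proof.
case=> h0 hD hZ; split => // a x Sx.
by have := hZ (pQ a) x Sx; rewrite qscale_pQ.
Qed.

Lemma fg_MB : finitely_generated M -> finitely_generated MB.
Proof.
case=> n [v hv]; exists n, v => m; case: (hv m) => c ->.
by exists (fun i => pQ (c i)); apply: eq_bigr => i _; rewrite qscale_pQ.
Qed.

Lemma mono_MB : monolithic M -> monolithic MB.
Proof.
case=> x [nx hx]; exists x; split => // S /submodule_MB' hS hne.
exact: hx.
Qed.

Lemma art_MB : artinian_module MB -> artinian_module M.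
Proof.
move=> h C hC hdec; apply: h => // n; exact: submodule_MB.
Qed.

Lemma pQ_surj (b : QB) : exists a, pQ a = b.
Proof. by exists (repr b); rewrite /pQ reprK. Qed.

Lemma pQ_ker d : annM d -> pQ d = pQ 0.
Proof. by move=> h; apply/pQ_eq; rewrite subr0. Qed.

End Quot.

Lemma faithful_of_extremal (R : pzRingType) :
  (forall (B : pzRingType) (f : {rmorphism R -> B}),
        (forall b : B, exists a : R, f a = b) ->
        (exists a : R, a != 0 /\ f a = 0) -> diamond B) ->
  forall (M : lmodType R), finitely_generated M -> monolithic M ->
  forall d : R, d != 0 -> annM M d -> artinian_module M.
Proof.
move=> hB M hfg hm d nd hd.
apply: art_MB; apply: (hB (QB M) (pQ M)).
- exact: pQ_surj.
- exists d; split => //; exact: (etrans (pQ_ker hd) (rmorph0 (pQ M))).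
- exact: fg_MB.
- exact: mono_MB.
Qed.
Local Close Scope quotient_scope.
Section Sub.
Variables (R : pzRingType) (M : lmodType R) (x : M).
Definition inH (y : M) := pdec (exists a, y = a *: x).
Definition H := {y : M | inH y}.
HB.instance Definition _ := [isSub for (@sval M inH)].
HB.instance Definition _ := [Choice of H by <:].
Lemma inH0 : inH 0. Proof. by apply/pdecP; exists 0; rewrite scale0r. Qed.
Lemma inHD u v : inH u -> inH v -> inH (u + v).
Proof. by move=> /pdecP[a ->] /pdecP[b ->]; apply/pdecP; exists (a + b); rewrite scalerDl. Qed.
Lemma inHN u : inH u -> inH (- u).
Proof. by move=> /pdecP[a ->]; apply/pdecP; exists (- a); rewrite scaleNr. Qed.
Lemma inHZ c u : inH u -> inH (c *: u).
Proof. by move=> /pdecP[a ->]; apply/pdecP; exists (c * a); rewrite scalerA. Qed.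

Definition hzero : H := exist _ 0 inH0.
Definition hadd (u v : H) : H := exist _ (val u + val v) (inHD (valP u) (valP v)).
Definition hopp (u : H) : H := exist _ (- val u) (inHN (valP u)).
Lemma haddA : associative hadd.
Proof. by move=> u v w; apply: val_inj; rewrite /= addrA. Qed.
Lemma haddC : commutative hadd.
Proof. by move=> u v; apply: val_inj; rewrite /= addrC. Qed.
Lemma hadd0 : left_id hzero hadd.
Proof. by move=> u; apply: val_inj; rewrite /= add0r. Qed.
Lemma haddN : left_inverse hzero hopp hadd.
Proof. by move=> u; apply: val_inj; rewrite /= addNr. Qed.
HB.instance Definition _ := GRing.isZmodule.Build H haddA haddC hadd0 haddN.
Definition hscale (a : R) (u : H) : H := exist _ (a *: val u) (inHZ a (valP u)).
Lemma hscaleA a b v : hscale a (hscale b v) = hscale (a * b) v.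
Proof. by apply: val_inj; rewrite /= scalerA. Qed.
Lemma hscale1 : left_id 1 hscale.
Proof. by move=> u; apply: val_inj; rewrite /= scale1r. Qed.
Lemma hscaleDr : right_distributive hscale +%R.
Proof. by move=> a u v; apply: val_inj; rewrite /= scalerDr. Qed.
Lemma hscaleDl v : {morph hscale^~ v: a b / a + b}.
Proof. by move=> a b; apply: val_inj; rewrite /= scalerDl. Qed.
HB.instance Definition _ := GRing.Zmodule_isLmodule.Build R H hscaleA hscale1 hscaleDr hscaleDl.

Lemma inHx : inH x. Proof. by apply/pdecP; exists 1; rewrite scale1r. Qed.
Definition hx : H := exist _ x inHx.

Lemma H_simple : x != 0 ->
  (forall S : M -> Prop, submodule S -> (exists y, S y /\ y != 0) -> S x) ->
  simple_module H.
Proof.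
move=> nx heart; split.
  exists hx; apply: contraNneq nx => /(congr1 val) /= ->; done.
move=> T [T0 TD TZ].
case: (classic (exists t, T t /\ t != 0)) => [[t [Tt nt]]|hn]; last first.
  left => t Tt; apply: NNPP => nt; apply: hn; exists t; split => //; exact/eqP.
right => h.
pose S := fun y : M => exists t, T t /\ val t = y.
have hS : submodule S.
  split; first by exists 0; split.
    by move=> y1 y2 [t1 [T1 <-]] [t2 [T2 <-]]; exists (t1 + t2); split => //; apply: TD.
  by move=> a y [t1 [T1 <-]]; exists (a *: t1); split => //; apply: TZ.
have [t0 [Tt0 vt0]] : S x.
  apply: heart hS _; exists (val t); split; first by exists t.
  apply/eqP => vt; apply/(negP nt)/eqP; apply: val_inj; exact: vt.
case: h => y hy; have /pdecP [a ya] := hy.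
have -> : exist _ y hy = a *: t0 by apply: val_inj; rewrite /= ya vt0.
exact: TZ.
Qed.

Lemma val_sum (I : Type) (r : seq I) (P : pred I) (F : I -> H) :
  val (\sum_(i <- r | P i) F i) = \sum_(i <- r | P i) val (F i).
Proof. by apply: (big_morph val) => //. Qed.

End Sub.

Lemma kill_pow (R : pzRingType) (M : lmodType R) :
  ACC (@left_ideal R) -> forall x : M, x != 0 ->
  (forall S : M -> Prop, submodule S -> (exists y, S y /\ y != 0) -> S x) ->
  forall c : R, (forall a, c * a = a * c) -> c *: x = 0 ->
  forall m : M, exists n, c ^+ n *: m = 0.
Proof.
move=> hacc x nx heart c cc cx m.
pose L := fun (j : nat) (a : R) => c ^+ j *: (a *: m) = 0.
have hL : forall j, left_ideal (L j).
  move=> j; split; first by rewrite /L scale0r scaler0.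
    by move=> a b; rewrite /L scalerDl scalerDr => -> ->; rewrite addr0.
  move=> b a; rewrite /L => h.
  rewrite -scalerA scalerA -(commrX j (esym (cc b))) -scalerA h scaler0 //.
have hinc : forall j a, L j a -> L j.+1 a.
  by move=> j a h; rewrite /L in h *; rewrite exprS -scalerA h scaler0.
have [N hN] := hacc L hL hinc.
  exists N.
  pose S := fun y : M => exists a, y = c ^+ N *: (a *: m).
  have hS : submodule S.
    split; first by exists 0; rewrite scale0r scaler0.
      by move=> y1 y2 [a1 ->] [a2 ->]; exists (a1 + a2); rewrite scalerDl scalerDr.
    move=> b y [a ->]; exists (b * a).
    by rewrite -scalerA scalerA (commrX N (esym (cc b))) -scalerA.
  case: (classic (exists y, S y /\ y != 0)) => [hne|hn].
    have [a xa] := heart S hS hne.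
    have : L N.+1 a by rewrite /L exprS -scalerA -xa.
    move/(hN N.+1 (leqnSn N)); rewrite /L -xa => x0.
    by move: nx; rewrite x0 eqxx.
  apply: NNPP => h; apply: hn; exists (c ^+ N *: (1 *: m)); split.
    by exists 1.
  by rewrite scale1r; apply/eqP.
Qed.

Lemma kill_all (R : pzRingType) (M : lmodType R) (c : R) :
  (forall a, c * a = a * c) -> finitely_generated M ->
  (forall m : M, exists n, c ^+ n *: m = 0) -> exists n, annM M (c ^+ n).
Proof.
move=> cc [k [v hv]] hm.
have hs : forall s : seq M, exists n, forall w, w \in s -> c ^+ n *: w = 0.
  elim=> [|w s [n2 h2]]; first by exists 0%N.
  have [n1 h1] := hm w; exists (n1 + n2)%N => u; rewrite inE => /orP [/eqP ->|us].
    by rewrite addnC exprD -scalerA h1 scaler0.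
  by rewrite exprD -scalerA h2 ?scaler0.
have [n hn] := hs [seq v i | i <- enum 'I_k].
exists n => m; have [cf ->] := hv m.
rewrite scaler_sumr big1 // => i _.
rewrite scalerA -(commrX n (esym (cc (cf i)))) -scalerA hn ?scaler0 //.
by apply: map_f; rewrite mem_enum.
Qed.

Lemma ev_horner (K : fieldType) (A : algType K) (z : A) (q : {poly K}) :
  \sum_(i < size q) q`_i *: z ^+ i = horner_alg z q.
Proof.
rewrite /horner_alg /horner_morph (horner_coef_wide _ (size_poly _ _)).
by apply: eq_bigr => i _; rewrite coef_map /= mulr_algl.
Qed.

Unset Implicit Arguments.
Theorem proposition5p1 (K : fieldType) (A : algType K) :
  noetherian_ring A -> simple_endos_algebraic A -> diamond_extremal A ->
  center_algebraic A.
Proof.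
move=> [hacc _] hsimp [_ hnd hq] z hz.
apply: NNPP => hnalg; apply: hnd => M hfg hmono; apply: NNPP => hart.
have hmono' := hmono.
case: hmono => x [nx heart].
pose f := fun h : H x => hscale z h.
have hf : module_endo f.
  split; first by move=> u v; apply: val_inj; rewrite /= scalerDr.
  move=> a u; apply: val_inj; rewrite /= !scalerA; congr (_ *: _); exact: hz.
have [p [p0 hp]] := hsimp (H x) (H_simple nx heart) f hf.
have hit : forall i, val (iter i f (hx x)) = z ^+ i *: x.
  elim=> [|i IH]; first by rewrite /= scale1r.
  by rewrite iterS /= IH scalerA -exprS.
pose c := horner_alg z p.
have cx : c *: x = 0.
  have := congr1 val (hp (hx x)); rewrite val_sum /= => h.
  rewrite /c -ev_horner scaler_suml -[RHS]h; apply: eq_bigr => i _.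
  by rewrite /= hit scalerA mulr_algl.
have cc : forall a, c * a = a * c.
  move=> a; rewrite /c -ev_horner mulr_suml mulr_sumr; apply: eq_bigr => i _.
  by rewrite -scalerAl scalerAr -!scalerAr -(commrX i (esym (hz a))).
have [n hn] := kill_all cc hfg (kill_pow hacc nx heart cc cx).
case: (eqVneq (c ^+ n) 0) => [e0|nz].
  apply: hnalg; exists (p ^+ n); split; first exact: expf_neq0.
  by rewrite ev_horner rmorphXn.
exact: hart (faithful_of_extremal hq hfg hmono' nz hn).
Qed.
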